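(* If $(S,K,I)$ is a split graph and $C$ is an induced cycle in the factor graph $\Phi(S)$, then $|C|\leq 5$.
   Context: A split graph $(S,K,I)$ is a graph $S$ together with a fixed partition $V(S)=K\dot\cup I$, where $K$ is a clique and $I$ is an independent set. For a vertex $v$ of $S$, $N_v$ denotes its open neighborhood in $S$ and $d_v=|N_v|$; $\eta_{uv}=|N_u\cap N_v|$. The factor graph $\Phi(S)$ is the loopless multigraph with vertex set $I$ in which, for distinct $u,v\in I$, there is one edge joining $u$ and $v$ for each 2-switch of $S$ acting on $u$ and $v$ (a 2-switch replaces edges $ab,cd$ with $ac,bd$ when $ab,cd\in E(S)$ and $ac,bd\notin E(S)$); equivalently, the multiplicity of $uv$ is $\sigma_{uv}=(d_u-\eta_{uv})(d_v-\eta_{uv})$, and $u,v$ are adjacent iff $\sigma_{uv}>0$. An induced cycle $C=v_1\ldots v_nv_1$ ($n\geq 3$) in $\Phi(S)$ consists of distinct vertices with $v_iv_{i+1}$ and $v_nv_1$ adjacent and no other pair adjacent (multiplicities ignored); $|C|=n$ is its number of vertices. *)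

(* Defs.v *)
From mathcomp Require Import all_boot.
Set Implicit Arguments. Unset Strict Implicit. Unset Printing Implicit Defensive.

Section SplitGraph.
Variables (V : finType) (e : rel V).

Definition simple_graph : Prop := symmetric e /\ irreflexive e.

Definition split_graph (K I : {set V}) : Prop :=
  [/\ simple_graph,
      K :&: I = set0,
      K :|: I = [set: V],
      (forall x y, x \in K -> y \in K -> x != y -> e x y)
    & (forall x y, x \in I -> y \in I -> ~~ e x y)].

Definition nbhd (v : V) : {set V} := [set w | e v w].
Definition deg (v : V) : nat := #|nbhd v|.
Definition eta (u v : V) : nat := #|nbhd u :&: nbhd v|.

(* multiplicity of the edge uv in the factor graph Phi(S) *)
Definition sigma (u v : V) : nat := (deg u - eta u v) * (deg v - eta u v).

(* adjacency in Phi(S) (vertex set I, loopless, multiplicities ignored) *)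
Definition phi_adj (u v : V) : bool := (u != v) && (0 < sigma u v).

Definition phi_induced_cycle (I : {set V}) (s : seq V) : Prop :=
  [/\ 3 <= size s, uniq s, all (fun x => x \in I) s &
      forall x0 (i j : nat), i < size s -> j < size s -> i != j ->
        phi_adj (nth x0 s i) (nth x0 s j) =
        ((j == (i.+1) %% size s) || (i == (j.+1) %% size s))].

End SplitGraph.

(* Main.v *)
Require Import Defs.
From mathcomp Require Import all_boot.
From mathcomp Require Import zify.

Definition incmp {T : finType} (A B : {set T}) :=
  ~~ (A \subset B) && ~~ (B \subset A).

Lemma card_setI_lt (T : finType) (A B : {set T}) :
  (#|A :&: B| < #|A|) = ~~ (A \subset B).
Proof.
have := subset_leqif_cards (subsetIl A B).
rewrite ltn_neqAle => -[-> ->]; rewrite andbT.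
by rewrite eqEsubset subsetIl /= subsetI subxx.
Qed.

Lemma phi_adj_inc (V : finType) (e : rel V) u v :
  phi_adj e u v = (u != v) && incmp (nbhd e u) (nbhd e v).
Proof.
rewrite /phi_adj /sigma muln_gt0 /deg /eta !subn_gt0 card_setI_lt.
by rewrite setIC card_setI_lt.
Qed.

Lemma core (T : finType) (X Y Z W U : {set T}) :
  incmp X Y -> incmp Y Z -> incmp Z W -> incmp U X ->
  ~~ incmp X Z -> ~~ incmp X W -> ~~ incmp Y W -> ~~ incmp U Y ->
  ~~ incmp U Z -> #|W| <= #|Y| -> #|U| <= #|Y| -> False.
Proof.
rewrite /incmp.
move=> /andP[nXY nYX] /andP[nYZ nZY] /andP[nZW nWZ] /andP[nUX nXU].
rewrite !negb_and !negbK.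
move=> XZ XW YW UY UZ cW cU.
have cardeq : forall A B : {set T}, A \subset B -> #|B| <= #|A| -> B \subset A.
  move=> A B AB c. have : A == B by rewrite eqEcard AB c.
  by move/eqP->.
case/orP: XZ => [sXZ|sZX].
- have sXW : X \subset W.
    case/orP: XW => // sWX. by case/negP: nWZ; apply: subset_trans sWX sXZ.
  have sWY : W \subset Y.
    case/orP: YW => // sYW. exact: cardeq.
  by case/negP: nXY; apply: subset_trans sXW sWY.
- have sZU : Z \subset U.
    case/orP: UZ => // sUZ. by case/negP: nUX; apply: subset_trans sUZ sZX.
  have sUY : U \subset Y.
    case/orP: UY => // sYU. exact: cardeq.
  by case/negP: nZY; apply: subset_trans sZU sUY.
Qed.

Theorem lemma3p1 (V : finType) (e : rel V) (K I : {set V}) (C : seq V) :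
  split_graph e K I -> phi_induced_cycle e I C -> size C <= 5.
Proof.
move=> _ [C3 uC _ adj].
have [x0 _] : exists x0 : V, True by case: C C3 {uC adj} => [|x ?]; [done|by exists x].
rewrite leqNgt; apply/negP => n6.
set n := size C in C3 uC adj n6.
have n0 : 0 < n by lia.
pose N (i : 'I_n) := #|nbhd e (nth x0 C i)|.
case: (@arg_maxnP _ (Ordinal n0) xpredT N isT) => m _ mmax.
pose P a := nbhd e (nth x0 C ((m + a) %% n)).
have cP : forall a, #|P a| <= #|P 0|.
  move=> a; rewrite /P addn0 (modn_small (ltn_ord m)).
  exact: (mmax (Ordinal (ltn_pmod (m + a) n0)) isT).
have key : forall a b, a < n -> b < n -> a != b ->
    incmp (P a) (P b) = (b == (a.+1) %% n) || (a == (b.+1) %% n).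
  move=> a b an bn ab.
  have neq : (m + a) %% n != (m + b) %% n.
    by rewrite eqn_modDl !modn_small.
  have := adj x0 _ _ (ltn_pmod (m + a) n0) (ltn_pmod (m + b) n0) neq.
  rewrite phi_adj_inc nth_uniq ?ltn_pmod // neq /= => ->.
  have hS : forall x, (x %% n).+1 %% n = x.+1 %% n.
    by move=> x; rewrite -addn1 modnDml addn1.
  by rewrite !hS -!addnS !eqn_modDl (modn_small bn) (modn_small an).
have n1 : (n - 1).+1 %% n = 0 by rewrite subn1 prednK // modnn.
have n2 : (n - 2).+1 %% n = n - 1 by rewrite modn_small; lia.
have s0 : 1 %% n = 1 by rewrite modn_small; lia.
have s1 : 2 %% n = 2 by rewrite modn_small; lia.
have s2 : 3 %% n = 3 by rewrite modn_small; lia.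
apply: (@core _ (P (n - 1)) (P 0) (P 1) (P 2) (P (n - 2))).
- rewrite key ?n1 ?eqxx //; clear -n6; lia.
- rewrite key ?s0 ?eqxx //; clear -n6; lia.
- rewrite key ?s1 ?eqxx //; clear -n6; lia.
- rewrite key ?n2 ?eqxx //; clear -n6; lia.
- rewrite key ?n1 ?s1; [rewrite /=; apply/negP; clear -n6; lia|clear -n6; lia|clear -n6; lia|clear -n6; lia].
- rewrite key ?n1 ?s2; [rewrite /=; apply/negP; clear -n6; lia|clear -n6; lia|clear -n6; lia|clear -n6; lia].
- rewrite key ?s0 ?s2; [rewrite /=; apply/negP; clear -n6; lia|clear -n6; lia|clear -n6; lia|clear -n6; lia].
- rewrite key ?n2 ?s0; [rewrite /=; apply/negP; clear -n6; lia|clear -n6; lia|clear -n6; lia|clear -n6; lia].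
- rewrite key ?n2 ?s1; [rewrite /=; apply/negP; clear -n6; lia|clear -n6; lia|clear -n6; lia|clear -n6; lia].
- exact: cP.
- exact: cP.
Qed.
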